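(* Let $\epsilon_1>0$ and let $u$ be a utility function on contexts of sensitivity $\Delta u\le1$ (context population size $|D_C|$ or overlap $|D_C\cap D_{C_V}|$ with a fixed starting context $C_V$, set to $-\infty$ on non-matching contexts). Consider the Uniform Sampling algorithm: starting with an empty multiset $C_M$, repeatedly draw a context $C$ by setting each of its $t$ bits independently to $1$ with probability $1/2$ and to $0$ otherwise, adding $C$ to $C_M$ whenever $f_M(D_C,V)=\mathrm{true}$, as long as $|C_M|\le n$; then output $\mathrm{Exp}^{\epsilon_1}_u(D,C_M)$. Then this algorithm satisfies $(2\epsilon_1,\ COE_M(\cdot,V))$-Output Constrained Differential Privacy.
   Context: Dataset $D$ over categorical attributes $A_1,\dots,A_m$ (domain sizes $|A_i|$, all possible values) and metric attribute $M$; $t=\sum_i|A_i|$. A context is a binary vector of length $t$, $c_{ij}=1$ meaning the $j$-th value of $A_i$ is selected; $D_C$ is the set of tuples of $D$ whose value in every $A_i$ is selected by $C$. $f_M(D_C,V)$ is a deterministic test of whether record $V$ is an outlier in $D_C$ w.r.t. $M$. $COE_M(D,V)$ is the set of contexts $C$ with $V\in D_C$ and $f_M(D_C,V)=\mathrm{true}$. $n$ is the desired number of samples. Sensitivity: $\Delta u=\max|u(D_1,r)-u(D_2,r)|$ over neighboring datasets (differing by adding/removing one record) and outputs $r$. $\mathrm{Exp}^{\epsilon}_u(D,\mathcal R)$ outputs $r\in\mathcal R$ with probability $\exp(\epsilon u(D,r)/(2\Delta u))/\sum_{r'\in\mathcal R}\exp(\epsilon u(D,r')/(2\Delta u))$.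 $D_1,D_2$ are $f$-neighbors if they differ by adding/removing one record and $f(D_1)=f(D_2)\ne\emptyset$; $\mathcal M$ satisfies $(\epsilon,f)$-Output Constrained Differential Privacy if $\Pr[\mathcal M(D_1)\in S]\le e^\epsilon\Pr[\mathcal M(D_2)\in S]$ for all $f$-neighbors $D_1,D_2$ and all output sets $S$. *)

(* Defs.v *)
From HB Require Import structures.
From mathcomp Require Import all_boot all_order all_algebra.
From mathcomp Require Import all_classical all_reals all_analysis.
Set Implicit Arguments. Unset Strict Implicit. Unset Printing Implicit Defensive.
Import Order.TTheory GRing.Theory Num.Theory.
Local Open Scope ring_scope.

Section Defs.
Variables (m : nat) (k : 'I_m -> nat) (Mt : eqType).

(* (attribute index i, value index j) : the bit c_ij of a context *)
Definition pair_t := {i : 'I_m & 'I_(k i)}.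
Definition tbits : nat := #|{: pair_t}|.
(* A context: binary vector of length t, represented as the set of bits set to 1 *)
Definition context := {set pair_t}.
(* A record: a value for every categorical attribute A_i, and a metric value *)
Definition record := ({dffun forall i : 'I_m, 'I_(k i)} * Mt)%type.
Definition dataset := seq record.

Definition selects (C : context) (x : record) : bool :=
  [forall i : 'I_m, Tagged (fun i => 'I_(k i)) (x.1 i) \in C].
Definition restrictC (D : dataset) (C : context) : dataset :=
  [seq x <- D | selects C x].

Definition COE (f : dataset -> record -> bool) (D : dataset) (V : record)
  : {set context} :=
  [set C | (V \in restrictC D C) && f (restrictC D C) V].

Definition neighbors (D1 D2 : dataset) : Prop :=
  exists x : record, perm_eq D2 (x :: D1) \/ perm_eq D1 (x :: D2).

Definition COE_neighbors f V (D1 D2 : dataset) : Prop :=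
  neighbors D1 D2 /\ COE f D1 V = COE f D2 V /\ COE f D1 V != finset.set0.

Variable R : realType.

(* Exponential mechanism over a multiset s of contexts (each occurrence is a
   candidate): probability that it outputs r *)
Definition exp_mech (eps du : R) (u : dataset -> context -> R) (D : dataset)
  (s : seq context) (r : context) : R :=
  (\sum_(c <- s | c == r) expR (eps * u D c / (2 * du))) /
  (\sum_(c <- s) expR (eps * u D c / (2 * du))).

(* probability of one drawn context: each of the t bits is 1 w.p. 1/2 *)
Definition draw_prob : R := (2^-1) ^+ tbits.

Definition accepted f (D : dataset) (V : record) (h : seq context) : seq context :=
  [seq C <- h | f (restrictC D C) V && (V \in restrictC D C)].

(* the loop "while |C_M| <= n" stops exactly after the L-th draw *)
Definition stops_at f D V n L (h : L.-tuple context) : bool :=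
  (size (accepted f D V h) == n.+1) &&
  (size (accepted f D V (take L.-1 h)) == n).

Definition unif_sampling_prob (eps1 du : R) (u : dataset -> context -> R)
  f V (n : nat) (D : dataset) (r : context) : \bar R :=
  (\sum_(L <oo)
     ((\sum_(h : L.-tuple context | stops_at f D V n h)
          draw_prob ^+ L * exp_mech eps1 du u D (accepted f D V h) r)%:E))%E.

Definition OCDP (eps : R) f V (M : dataset -> context -> \bar R) : Prop :=
  forall D1 D2 : dataset, COE_neighbors f V D1 D2 ->
  forall S : {set context},
    (\sum_(r in S) M D1 r <= (expR eps)%:E * \sum_(r in S) M D2 r)%E.

End Defs.

(* Main.v *)
Require Import Defs.
From HB Require Import structures.
From mathcomp Require Import all_boot all_order all_algebra.
From mathcomp Require Import all_classical all_reals all_analysis.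
From mathcomp Require Import ring lra.
Import Order.TTheory GRing.Theory Num.Theory.
Local Open Scope ring_scope.

Lemma em_ge0 (m : nat) (k : 'I_m -> nat) (Mt : eqType) (R : realType)
  (u : dataset k Mt -> context k -> R) (du eps1 : R) D s r :
  0 <= exp_mech eps1 du u D s r.
Proof.
by rewrite /exp_mech divr_ge0 // sumr_ge0 // => i _; rewrite expR_ge0.
Qed.

Lemma em_le (m : nat) (k : 'I_m -> nat) (Mt : eqType) (R : realType)
  (u : dataset k Mt -> context k -> R) (du eps1 : R) D1 D2 s r :
  0 < eps1 -> 0 < du ->
  (forall c, c \in s -> `|u D1 c - u D2 c| <= du) ->
  exp_mech eps1 du u D1 s r <= expR eps1 * exp_mech eps1 du u D2 s r.
Proof.
move=> he hd hs.
set a := expR (eps1 / 2).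
have aa : a * a = expR eps1 by rewrite -expRD; congr expR; field.
have key : forall D D' c, `|u D c - u D' c| <= du ->
    expR (eps1 * u D c / (2 * du)) <= a * expR (eps1 * u D' c / (2 * du)).
  move=> D D' c h; rewrite /a -expRD ler_expR.
  have h1 : u D c - u D' c <= du by apply: le_trans h; exact: ler_norm.
  have -> : eps1 / 2 + eps1 * u D' c / (2 * du) =
            eps1 * (du + u D' c) / (2 * du) by field; rewrite gt_eqF.
  rewrite ler_pM2r ?invr_gt0 ?mulr_gt0 // ler_pM2l //.
  by rewrite -lerBlDr.
have hs' : forall c, c \in s -> `|u D2 c - u D1 c| <= du.
  by move=> c /hs; rewrite distrC.
pose N1 := \sum_(c <- s | c == r) expR (eps1 * u D1 c / (2 * du)).
pose N2 := \sum_(c <- s | c == r) expR (eps1 * u D2 c / (2 * du)).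
pose S1 := \sum_(c <- s) expR (eps1 * u D1 c / (2 * du)).
pose S2 := \sum_(c <- s) expR (eps1 * u D2 c / (2 * du)).
have hN : N1 <= a * N2.
  rewrite /N1 /N2 mulr_sumr big_seq_cond [X in _ <= X]big_seq_cond.
  by apply: ler_sum => c /andP[cs _]; apply: key; apply: hs.
have hS : S2 <= a * S1.
  rewrite /S1 /S2 mulr_sumr big_seq_cond [X in _ <= X]big_seq_cond.
  by apply: ler_sum => c /andP[cs _]; apply: key; apply: hs'.
have S1ge : 0 <= S1 by rewrite sumr_ge0 // => i _; rewrite expR_ge0.
have S2ge : 0 <= S2 by rewrite sumr_ge0 // => i _; rewrite expR_ge0.
have N2ge : 0 <= N2 by rewrite sumr_ge0 // => i _; rewrite expR_ge0.
have a0 : 0 < a by rewrite expR_gt0.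
rewrite /exp_mech -/N1 -/N2 -/S1 -/S2.
have [S20|S2p] := eqVneq S2 0.
  have [S10|S1p] := eqVneq S1 0.
    by rewrite S10 S20 !invr0 !mulr0.
  (* S2 = 0 but S1 > 0 : then N2 <= S2 ... N1 <= a N2 <= a S2 = 0 *)
  have N20 : N2 <= S2.
    rewrite /N2 /S2 big_mkcond /= ler_sum // => i _; case: ifP => _ //=.
  have : N1 <= 0 by apply: le_trans hN _; rewrite S20 in N20;
    rewrite pmulr_rle0 //; exact: N20.
  move=> h; rewrite (@le_trans _ _ 0) //.
    by apply: mulr_le0_ge0 => //; rewrite invr_ge0.
  by rewrite mulr_ge0 ?expR_ge0 // divr_ge0.
have S2pos : 0 < S2 by rewrite lt_neqAle eq_sym S2p.
have S1pos : 0 < S1.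
  by rewrite (@lt_le_trans _ _ (S2 / a)) ?divr_gt0 // ler_pdivrMr // mulrC.
rewrite -aa.
apply: (@le_trans _ _ (a * N2 / S1)); first by rewrite ler_wpM2r // invr_ge0.
have hinv : S1^-1 <= a / S2.
  rewrite -(@ler_pM2r _ (S1 * S2)) ?mulr_gt0 //.
  have -> : S1^-1 * (S1 * S2) = S2 by field; rewrite gt_eqF.
  have -> : a / S2 * (S1 * S2) = a * S1 by field; rewrite gt_eqF.
  exact: hS.
apply: le_trans (ler_wpM2l _ hinv) _; first by rewrite mulr_ge0 // ltW.
have -> : a * N2 * (a / S2) = a * a * (N2 / S2) by field; rewrite gt_eqF.
exact: lexx.
Qed.

Theorem theorem4 (m : nat) (k : 'I_m -> nat) (Mt : eqType) (R : realType)
  (f : dataset k Mt -> record k Mt -> bool) (V : record k Mt)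
  (u : dataset k Mt -> context k -> R) (du eps1 : R) (n : nat) :
  0 < eps1 -> 0 < du -> du <= 1 ->
  (forall D1 D2 : dataset k Mt, neighbors D1 D2 ->
     forall C : context k, V \in restrictC D1 C -> V \in restrictC D2 C ->
       `|u D1 C - u D2 C| <= du) ->
  OCDP (2 * eps1) f V (unif_sampling_prob eps1 du u f V n).
Proof.
move=> he hd hd1 hu D1 D2 [Hn [HC _]] S.
have accE : forall D h, accepted f D V h = [seq C <- h | C \in COE f D V].
  by move=> D h; apply: eq_filter => C; rewrite inE andbC.
have acc12 : forall h, accepted f D1 V h = accepted f D2 V h.
  by move=> h; rewrite !accE HC.
have st12 : forall L (h : L.-tuple (context k)), stops_at f D1 V n h = stops_at f D2 V n h.
  by move=> L h; rewrite /stops_at !acc12.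
have e12 : expR eps1 <= expR (2 * eps1).
  by rewrite ler_expR; lra.
have dp0 : 0 <= draw_prob k R by rewrite /draw_prob exprn_ge0 // invr_ge0.
rewrite ge0_sume_distrr; last first.
  move=> r _; apply: nneseries_ge0 => L _ _; rewrite lee_fin sumr_ge0 // => h _.
  by rewrite mulr_ge0 ?exprn_ge0 ?em_ge0.
apply: lee_sum => r _.
rewrite /unif_sampling_prob -nneseriesZl; last first.
  move=> L _; rewrite lee_fin sumr_ge0 // => h _.
  by rewrite mulr_ge0 ?exprn_ge0 ?em_ge0.
apply: lee_nneseries.
  move=> L _ _; rewrite lee_fin sumr_ge0 // => h _.
  by rewrite mulr_ge0 ?exprn_ge0 ?em_ge0.
move=> L _; rewrite lee_fin mulr_sumr.
under eq_bigl do rewrite st12.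
apply: ler_sum => h _.
rewrite acc12 [X in _ <= X]mulrCA; apply: ler_wpM2l; first exact: exprn_ge0.
apply: (le_trans (@em_le _ _ _ _ u du eps1 D1 D2 _ r he hd _)); last first.
  by apply: ler_wpM2r => //; exact: em_ge0.
  move=> c; rewrite accE mem_filter => /andP[cC _].
  have hn' : neighbors D1 D2 by [].
  have c1 : c \in COE f D1 V by rewrite HC.
  move: c1 cC; rewrite !inE => /andP[V1 _] /andP[V2 _].
  exact: (hu D1 D2 hn' c V1 V2).
Qed.
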